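(* Let $\Delta\geq 1$ be an integer and let $G$ be a graph with $n$ vertices, $m$ edges and maximum degree $\Delta$. Then $$c(G)\;\leq\;1+n+\left(\frac{2^{\Delta+1}-\Delta-2}{\binom{\Delta+1}{2}}\right)m\;\leq\;1+\left(\frac{2^{\Delta+1}-1}{\Delta+1}\right)n.$$
   Context: All graphs are finite, simple and undirected. A clique of a graph $G$ is a (possibly empty) set of pairwise adjacent vertices; $c(G)$ denotes the number of cliques of $G$ (including the empty clique, all single vertices and all edges). *)

(* Defs.v *)
From mathcomp Require Import all_boot all_order all_algebra.
Set Implicit Arguments. Unset Strict Implicit. Unset Printing Implicit Defensive.

Definition simple_graph (T : finType) (e : rel T) : Prop :=
  symmetric e /\ irreflexive e.

Definition is_clique (T : finType) (e : rel T) (A : {set T}) : bool :=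
  [forall x in A, forall y in A, (x != y) ==> e x y].

(* c(G): number of cliques, including the empty clique. *)
Definition num_cliques (T : finType) (e : rel T) : nat :=
  #|[set A : {set T} | is_clique e A]|.

Definition edges (T : finType) (e : rel T) : {set {set T}} :=
  [set A : {set T} | (#|A| == 2) && is_clique e A].

Definition num_edges (T : finType) (e : rel T) : nat := #|edges e|.

Definition degree (T : finType) (e : rel T) (v : T) : nat := #|[set u | e v u]|.

Definition max_degree (T : finType) (e : rel T) : nat := \max_(v : T) degree e v.

(* Main.v *)
Require Import Defs.
From mathcomp Require Import all_boot all_order all_algebra.
From mathcomp Require Import zify ring lra.
Import Order.TTheory GRing.Theory Num.Theory.
Local Open Scope ring_scope.

Lemma cliqueP (T : finType) (e : rel T) (A : {set T}) :
  reflect (forall x y, x \in A -> y \in A -> x != y -> e x y) (is_clique e A).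
Proof.
apply: (iffP forall_inP) => [H x y xA yA nxy | H x xA].
  by move/forall_inP: (H x xA) => /(_ y yA) /implyP; apply.
by apply/forall_inP => y yA; apply/implyP; apply: H.
Qed.

Lemma clique_sub (T : finType) (e : rel T) (A B : {set T}) :
  B \subset A -> is_clique e A -> is_clique e B.
Proof.
move=> BA /cliqueP H; apply/cliqueP => x y xB yB; apply: H; exact: (subsetP BA).
Qed.

Lemma ler_sum_subcond (I : finType) (P Q : pred I) (F : I -> rat) :
  (forall i, P i -> Q i) -> (forall i, Q i -> 0 <= F i) ->
  \sum_(i | P i) F i <= \sum_(i | Q i) F i.
Proof.
move=> PQ F0; rewrite [X in _ <= X](bigID P) /=.
have -> : \sum_(i | P i) F i = \sum_(i | Q i && P i) F i.
  by apply: eq_bigl => i; case: (boolP (P i)) => Pi; rewrite ?andbT ?andbF ?PQ.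
by rewrite lerDl sumr_ge0 // => i /andP[/F0].
Qed.

Lemma binsum D : (\sum_(j < D.+1) 'C(D.+2, j.+2) + D.+3 = 2 ^ D.+2)%N.
Proof.
have := expnDn 1 1 D.+2; rewrite big_ord_recl big_ord_recl /=.
rewrite /bump /= !exp1n !muln1 bin1 => ->.
rewrite addnC addnA; congr (_ + _)%N; apply: eq_bigr => i _; by rewrite !exp1n !muln1.
Qed.

Lemma b2 n : (2 * 'C(n.+2, 2) = n.+2 * n.+1)%N.
Proof. by rewrite -(mul_bin_diag n.+2 1) bin1. Qed.

Lemma binid D j : ('C(D, j) * 'C(D.+2, 2) = 'C(D.+2, j.+2) * 'C(j.+2, 2))%N.
Proof.
have E1 := mul_bin_diag D.+2 j.+1.
have E2 := mul_bin_diag D.+1 j.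
apply/eqP; rewrite -(eqn_pmul2l (isT : (0 < 2)%N)); apply/eqP.
have -> : (2 * ('C(D, j) * 'C(D.+2, 2)) = D.+2 * (D.+1 * 'C(D, j)))%N.
  by rewrite mulnCA b2 mulnC mulnA.
have -> : (2 * ('C(D.+2, j.+2) * 'C(j.+2, 2)) = j.+1 * (j.+2 * 'C(D.+2,j.+2)))%N.
  by rewrite mulnCA b2 mulnC mulnA [(j.+2 * _)%N]mulnC.
by rewrite /= in E1 E2; rewrite E2 mulnCA E1.
Qed.

Definition alpha D : rat := (2 ^ D.+2 - D.+1 - 2)%N%:R / ('C(D.+2, 2))%:R.

Lemma Cpos n : ('C(n.+2, 2))%:R != 0 :> rat.
Proof. by rewrite pnatr_eq0 -lt0n bin_gt0. Qed.

Lemma alpha_sum D :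
  \sum_(j < D.+1) (('C(D, j))%:R * (('C(j.+2, 2))%:R)^-1 : rat) = alpha D.
Proof.
rewrite /alpha.
have -> : (2 ^ D.+2 - D.+1 - 2 = \sum_(j < D.+1) 'C(D.+2, j.+2))%N.
  by rewrite -subnDA addn2 -binsum addnK.
rewrite natr_sum mulr_suml; apply: eq_bigr => j _.
apply/eqP; rewrite eqr_div ?Cpos //; apply/eqP.
by rewrite -!natrM binid.
Qed.

Lemma sum_subsets (T : finType) (A : {set T}) D (h : nat -> rat) :
  (#|A| <= D)%N ->
  \sum_(S : {set T} | S \subset A) h #|S| = \sum_(j < D.+1) ('C(#|A|, j))%:R * h j.
Proof.
move=> AD.
rewrite (partition_big (fun S : {set T} => (inord #|S| : 'I_D.+1)) xpredT) //.
apply: eq_bigr => j _.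
rewrite (eq_bigl (fun S => S \in [set S : {set T} | S \subset A & #|S| == j])); last first.
  move=> S; rewrite inE; case: (boolP (S \subset A)) => //= SA.
  have lt : (#|S| < D.+1)%N by rewrite ltnS (leq_trans (subset_leq_card SA)).
  by apply/eqP/eqP => [<-|->]; [rewrite inordK | rewrite inord_val].
rewrite (eq_bigr (fun _ => h j)); last by move=> S; rewrite inE => /andP[_ /eqP->].
by rewrite sumr_const cards_draws mulr_natl.
Qed.

Lemma edge_bound (T : finType) (e : rel T) D (f : {set T}) :
  simple_graph e -> (forall v, degree e v <= D.+1)%N -> f \in edges e ->
  \sum_(K : {set T} | is_clique e K && (f \subset K)) (('C(#|K|, 2))%:R)^-1 <= alpha D.
Proof.
move=> [se ie] degD; rewrite inE => /andP[/cards2P[u [v [uv ->]]] cf].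
have euv : e u v by apply: (cliqueP _ _ _ cf) => //; rewrite !inE eqxx ?orbT.
set A := [set w | e u w] :\ v.
have cardA : (#|A| <= D)%N.
  by have := degD u; rewrite /degree (cardsD1 v) inE euv add1n ltnS.
pose phi := fun K : {set T} => K :\: [set u; v].
set P := [set K : {set T} | is_clique e K && ([set u; v] \subset K)].
rewrite (eq_bigl (fun K => K \in P)); last by move=> K; rewrite inE.
have Heq : forall K, K \in P -> #|K| = (#|phi K|).+2.
  move=> K; rewrite inE => /andP[_ sK]; rewrite /phi cardsD (setIidPr sK) cards2 uv /=.
  have := subset_leq_card sK; rewrite cards2 uv /= => le2.
  by rewrite -addn2 subnK.
rewrite (eq_bigr (fun K => (('C((#|phi K|).+2, 2))%:R)^-1)); last by move=> K /Heq ->.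
have -> : \sum_(K in P) (('C((#|phi K|).+2, 2))%:R)^-1 =
          \sum_(S in phi @: P) (('C(#|S|.+2, 2))%:R)^-1 :> rat.
  rewrite big_imset //= => K1 K2; rewrite !inE => /andP[_ s1] /andP[_ s2] E.
  apply/setP => w; case: (boolP (w \in [set u; v])) => wf.
    by rewrite (subsetP s1) // (subsetP s2).
  by have := congr1 (fun S : {set T} => w \in S) E; rewrite /phi /= !inE -!in_set2 wf.
have HS : \sum_(S in phi @: P) (('C(#|S|.+2, 2))%:R)^-1 <=
          \sum_(S : {set T} | S \subset A) (('C(#|S|.+2, 2))%:R)^-1 :> rat.
  apply: ler_sum_subcond.
- move=> S /imsetP[K]; rewrite inE => /andP[cK sK] ->.
  apply/subsetP => w; rewrite !inE negb_or => /andP[/andP[wu wv] wK].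
  rewrite wv /=; apply: (cliqueP _ _ _ cK); rewrite // 1?eq_sym //.
  by rewrite (subsetP sK) // !inE eqxx.
- by move=> S _; rewrite invr_ge0 ler0n.
apply: le_trans HS _.
rewrite (@sum_subsets T A D (fun s => (('C(s.+2, 2))%:R)^-1) cardA) -alpha_sum.
apply: ler_sum => j _; apply: ler_wpM2r; first by rewrite invr_ge0 ler0n.
by rewrite ler_nat leq_bin2l.
Qed.
Lemma handshake (T : finType) (e : rel T) D :
  simple_graph e -> (forall v, degree e v <= D)%N ->
  (2 * num_edges e <= D * #|T|)%N.
Proof.
move=> [se ie] degD.
have -> : (2 * num_edges e = \sum_(f in edges e) \sum_(v in f) 1)%N.
  rewrite /num_edges -sum1_card big_distrr /=; apply: eq_bigr => f.
  by rewrite inE => /andP[/eqP c2 _]; rewrite sum1_card c2 muln1.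
rewrite (exchange_big_dep xpredT) //= mulnC -sum_nat_const.
apply: leq_sum => v _; rewrite sum1_card; apply: leq_trans (degD v).
apply: leq_trans (leq_imset_card (fun u => [set v; u]) [set u | e v u]).
apply: subset_leq_card; apply/subsetP => f; rewrite unfold_in /= inE => /andP[/andP[c2 cf] vf].
move/cards2P: c2 => [x [y [xy fE]]]; rewrite fE !inE in vf cf *.
have exy : e x y by apply: (cliqueP _ _ _ cf) => //; rewrite !inE eqxx ?orbT.
case/orP: vf => /eqP vE; apply/imsetP.
  by exists y; rewrite ?inE vE.
by exists x; rewrite ?inE ?vE 1?se // setUC.
Qed.

Theorem theorem3 (T : finType) (e : rel T) (Delta : nat) :
  simple_graph e -> (1 <= Delta)%N -> max_degree e = Delta ->
  let n : rat := (#|T|)%:R in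
  let m : rat := (num_edges e)%:R in
  let c : rat := (num_cliques e)%:R in
  c <= 1 + n + ((2 ^ Delta.+1 - Delta - 2)%N%:R / ('C(Delta.+1, 2))%:R) * m
  /\
  1 + n + ((2 ^ Delta.+1 - Delta - 2)%N%:R / ('C(Delta.+1, 2))%:R) * m
    <= 1 + ((2 ^ Delta.+1 - 1)%N%:R / (Delta.+1)%:R) * n.
Proof.
move=> sg D1 maxD n m c.
have degD : forall v, (degree e v <= Delta)%N by move=> v; rewrite -maxD; exact: leq_bigmax.
case: Delta D1 maxD degD => [//|D] _ _ degD.
have -> : (2 ^ D.+2 - D.+1 - 2)%N%:R / ('C(D.+2, 2))%:R = alpha D by [].
split.
- have cE : c = \sum_(K | is_clique e K) (1 : rat).
    by rewrite /c /num_cliques -sumr_const; apply: eq_bigl => K; rewrite inE.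
  rewrite cE (bigID (fun K : {set T} => 2 <= #|K|)%N) /= addrC; apply: lerD.
  + have HS1 : \sum_(K | is_clique e K && ~~ (2 <= #|K|)%N) (1:rat) <=
               \sum_(K in set0 |: [set [set x] | x : T]) 1.
      apply: ler_sum_subcond => // K /andP[_]; rewrite -ltnNge ltnS => K1.
      rewrite in_setU1; move: K1; rewrite leq_eqVlt ltnS leqn0.
      case/orP => [/cards1P[x ->]|/eqP/cards0_eq ->]; rewrite ?eqxx //.
      by apply/orP; right; apply/imsetP; exists x.
    apply: le_trans HS1 _; rewrite sumr_const /n.
    apply: (@le_trans _ _ ((1 + #|T|)%N%:R)); last by rewrite natrD.
    rewrite ler_nat cardsU1.
    by apply: leq_add; [exact: leq_b1 | exact: leq_imset_card].
  + have H1 : forall K : {set T}, is_clique e K && (2 <= #|K|)%N -> (1:rat) =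
        \sum_(f | (f \in edges e) && (f \subset K)) (('C(#|K|, 2))%:R)^-1.
      move=> K /andP[cK K2].
      rewrite (eq_bigl (fun f => f \in [set f : {set T} | f \subset K & (#|f| == 2)%N])); last first.
        move=> f; rewrite !inE; case: (boolP (f \subset K)) => fK; rewrite ?andbF ?andbT //=.
        by rewrite (@clique_sub _ _ K f fK cK) andbT.
      by rewrite sumr_const cards_draws -(mulr_natr (('C(#|K|, 2))%:R)^-1) mulVf // pnatr_eq0 -lt0n bin_gt0.
    rewrite (eq_bigr _ H1) (exchange_big_dep (fun f => f \in edges e)) /=; last first.
      by move=> K f _ /andP[].
    have HS2 : forall f, f \in edges e ->
      \sum_(K | (is_clique e K && (2 <= #|K|)%N) && ((f \in edges e) && (f \subset K)))
          (('C(#|K|, 2))%:R)^-1 <= alpha D.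
      move=> f fe; apply: le_trans _ (@edge_bound _ _ _ _ sg degD fe).
      apply: ler_sum_subcond => [K /andP[/andP[-> _] /andP[_ ->]] //|K _].
      by rewrite invr_ge0 ler0n.
    apply: le_trans (ler_sum _ HS2) _.
    by rewrite sumr_const mulr_natr.
- have hs := @handshake _ _ _ sg degD.
  set q := (2 ^ D.+2 - D.+1 - 2)%N.
  have qE : (2 ^ D.+2 - 1 = q + D.+2)%N.
    have Hs := binsum D; rewrite /q -Hs; lia.
  rewrite /alpha -/q qE natrD.
  have CE : ('C(D.+2,2))%:R = (D.+2)%:R * (D.+1)%:R / 2 :> rat.
    by rewrite -natrM -b2 natrM; field.
  have hsr : 2 * m <= (D.+1)%:R * n by rewrite /m /n -!natrM ler_nat.
  have h0 : 0 <= D%:R :> rat by apply: ler0n.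
  have nz2 : (D.+1)%:R != 0 :> rat by rewrite pnatr_eq0.
  have E1 : q%:R / ('C(D.+2,2))%:R * m =
            (q%:R / ((D.+2)%:R * (D.+1)%:R)) * (2 * m) :> rat.
    by rewrite CE; field; rewrite !gt_eqF //; lra.
  have E2 : (q%:R + (D.+2)%:R) / (D.+2)%:R * n =
            n + (q%:R / ((D.+2)%:R * (D.+1)%:R)) * ((D.+1)%:R * n) :> rat.
    by field; rewrite !gt_eqF //; lra.
  rewrite E1 E2 addrA lerD2l; apply: ler_wpM2l hsr.
  by rewrite divr_ge0 // ?mulr_ge0 // ler0n.
Qed.
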